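(* Let $n\ge 1$ and let $B=(b_{st})$ be an $n\times n$ symmetric matrix over the complex numbers. For $1\le i,j\le n$ let $B_{[ij]}=(b^{ij}_{st})$ be the $n\times n$ matrix with $b^{ij}_{st}=b_{st}$ if $(s,t)\ne(i,j)$ and $(s,t)\ne(j,i)$, and $b^{ij}_{st}=0$ otherwise. For $i<j$ let $B^{i,j}_{i,j}$ denote the $(n-2)\times(n-2)$ submatrix of $B$ obtained by deleting rows $i,j$ and columns $i,j$. Then $$\frac{1}{2}(n^2-n)\,d_2(B)=\sum_{1\le i\le j\le n} d_2(B_{[ij]})+\sum_{1\le i<j\le n} b_{ij}^2\, d_2(B^{i,j}_{i,j}).$$
   Context: For an $n\times n$ matrix $M=(m_{ij})$ ($n\ge 2$), the second immanant is $d_2(M)=\sum_{\sigma\in S_n}\chi_2(\sigma)\prod_{s=1}^n m_{s\sigma(s)}$, where $\chi_2$ is the irreducible character of the symmetric group $S_n$ corresponding to the partition $(2,1^{n-2})$. It satisfies $d_2(X)=\sum_{i=1}^k x_{ii}\det(X(i))-\det(X)$ for a $k\times k$ matrix $X$, where $X(i)$ is $X$ with row and column $i$ deleted; for matrices of order less than $2$, $d_2$ is understood via this identity, with the determinant of the empty ($0\times 0$) matrix equal to $1$. *)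

(* Defs.v *)
From HB Require Import structures.
From mathcomp Require Import all_boot all_order all_algebra all_fingroup.
From mathcomp Require Import zify.
Set Implicit Arguments. Unset Strict Implicit. Unset Printing Implicit Defensive.
Import Order.TTheory GRing.Theory Num.Theory.
Local Open Scope ring_scope.

(* chi_2(sigma) for the partition (2,1^{m-2}): sgn(sigma) * (#fixed points - 1). *)
Definition chi2 (m : nat) (s : 'S_m) (R : nzRingType) : R :=
  (-1) ^+ s * ((#|[set x | s x == x]|)%:R - 1).

(* The second immanant d_2. For m < 2 it agrees with the convention
   d_2(X) = sum_i x_ii det X(i) - det X (d_2 = -1 for m = 0, 0 for m = 1). *)
Definition d2 (R : comNzRingType) (m : nat) (A : 'M[R]_m) : R :=
  \sum_(s : 'S_m) chi2 s R * \prod_(k : 'I_m) A k (s k).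

Definition zero_pair (R : nzRingType) (n : nat) (B : 'M[R]_n) (i j : 'I_n) : 'M[R]_n :=
  \matrix_(s, t) if ((s == i) && (t == j)) || ((s == j) && (t == i)) then 0 else B s t.

Lemma del2_idx_proof (n : nat) (i j : 'I_n) (k : 'I_(n.-2)) :
  (bump j (bump i k) < n)%N.
Proof.
case: k => k /= hk; rewrite /bump.
case: (i <= k)%N; case: (j <= _)%N; rewrite /= ?add0n ?add1n;
  case: n i j hk => [|[|n]] //= *; lia.
Qed.

(* For i < j : the k-th (0-based) index of {0..n-1} \ {i,j}, in increasing order. *)
Definition del2_idx (n : nat) (i j : 'I_n) (k : 'I_(n.-2)) : 'I_n :=
  Ordinal (del2_idx_proof i j k).

(* B^{i,j}_{i,j}: delete rows i, j and columns i, j (meaningful for i < j). *)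
Definition del2 (R : nzRingType) (n : nat) (B : 'M[R]_n) (i j : 'I_n) : 'M[R]_(n.-2) :=
  mxsub (del2_idx i j) (del2_idx i j) B.

(* Main.v *)
Require Import Defs.
From HB Require Import structures.
From mathcomp Require Import all_boot all_order all_algebra all_fingroup.
From mathcomp Require Import zify ring.
Import Order.TTheory GRing.Theory Num.Theory.
Local Open Scope ring_scope.

Lemma sum_lift_perm (R : nmodType) n (i j : 'I_n.+1) (F : 'S_n.+1 -> R) :
  \sum_(s : 'S_n.+1 | s i == j) F s = \sum_(s : 'S_n) F (lift_perm i j s).
Proof.
rewrite (reindex (lift_perm i j)) /=; last first.
  pose ulsf (i0 : 'I_n.+1) (s : 'S_n.+1) k := odflt k (unlift (s i0) (s (lift i0 k))).
  have ulsfK i0 (s : 'S_n.+1) k: lift (s i0) (ulsf i0 s k) = s (lift i0 k).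
    rewrite /ulsf; have:= neq_lift i0 k.
    by rewrite -(can_eq (permK s)) => /unlift_some[] ? ? ->.
  have inj_ulsf: injective (ulsf i _).
    move=> s; apply: can_inj (ulsf (s i) s^-1%g) _ => k'.
    by rewrite {1}/ulsf ulsfK !permK liftK.
  exists (fun s => perm (inj_ulsf s)) => [s _ | s].
    by apply/permP=> k'; rewrite permE /ulsf lift_perm_lift lift_perm_id liftK.
  move/(s _ =P _) => si0; apply/permP=> k.
  case: (unliftP i k) => [k'|] ->; rewrite ?lift_perm_id //.
  by rewrite lift_perm_lift -si0 permE ulsfK.
by apply: eq_big => [s | s _] //; rewrite lift_perm_id eqxx.
Qed.

Lemma zp_d2 (R : comNzRingType) n (B : 'M[R]_n) i j :
  d2 (zero_pair B i j) =
  \sum_(s : 'S_n) chi2 s R * (\prod_k B k (s k)) * (~~ ((s i == j) || (s j == i)))%:R.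
Proof.
rewrite /d2; apply: eq_bigr => s _.
have [/orP[/eqP h|/eqP h]|h] := boolP ((s i == j) || (s j == i)).
- rewrite mulr0 (bigD1 i) //= mxE h !eqxx /= mul0r mulr0 //.
- rewrite mulr0 (bigD1 j) //= mxE h !eqxx orbT /= mul0r mulr0 //.
rewrite mulr1; congr (_ * _); apply: eq_bigr => k _; rewrite mxE.
case: ifP => // /orP[/andP[/eqP ki /eqP kj]|/andP[/eqP ki /eqP kj]].
  by move: h; rewrite -ki kj eqxx.
by move: h; rewrite -ki kj eqxx orbT.
Qed.

Section B.
Variables (m : nat) (i j : 'I_m.+2).
Hypothesis hij : (i < j)%N.

Definition jp : 'I_m.+1 := Ordinal (n:=m.+1) (m:=j.-1) ltac:(case: j hij => /= [j' hj] h; lia).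
Definition ip : 'I_m.+1 := Ordinal (n:=m.+1) (m:=i) ltac:(case: j hij => /= [j' hj] h; lia).

Lemma lift_jp : lift i jp = j.
Proof. apply: val_inj => /=; rewrite /bump; case: j hij => /= [j' hj] h.
have -> : (i <= j'.-1)%N by lia. lia. Qed.

Lemma lift_ip : lift j ip = i.
Proof. apply: val_inj => /=; rewrite /bump; case: j hij => /= [j' hj] h.
have -> : (j' <= i)%N = false by lia. lia. Qed.

Lemma lift2 (x : 'I_m) : lift j (lift ip x) = lift i (lift jp x).
Proof. apply: val_inj => /=; rewrite /bump /=; case: j hij => /= [j' hj] h.
case: (leqP i x) => h1; case: (leqP j'.-1 x) => h2 /=;
 [case: (leqP j' (1+x)%N) => h3; case: (leqP i (1+x)%N) => h4
 |case: (leqP j' (1+x)%N) => h3; case: (leqP i (x)%N) => h4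
 |case: (leqP j' (x)%N) => h3; case: (leqP i (1+x)%N) => h4
 |case: (leqP j' (x)%N) => h3; case: (leqP i (x)%N) => h4]; lia.
Qed.

Lemma del2_lift (x : 'I_m) : del2_idx i j x = lift i (lift jp x).
Proof. rewrite -lift2; exact: val_inj. Qed.

End B.
Arguments jp {m i j}.
Arguments ip {m i j}.
Arguments lift_jp {m i j}.
Arguments lift_ip {m i j}.
Arguments lift2 {m i j}.
Arguments del2_lift {m i j}.



Lemma cardfix k (f : 'S_k) : #|[set x | f x == x]| = (\sum_x (f x == x : nat))%N.
Proof.
rewrite -sum1_card big_mkcond; apply eq_bigr => x _; rewrite inE; by case: eqP.
Qed.

Lemma sumB (R : comNzRingType) m (B : 'M[R]_m.+2) (i j : 'I_m.+2) (hij : (i < j)%N)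
  (hB : B^T = B) :
  \sum_(s : 'S_m.+2 | (s i == j) && (s j == i)) chi2 s R * \prod_k B k (s k)
  = - (B i j ^+ 2 * d2 (del2 B i j)).
Proof.
rewrite big_mkcondr /= sum_lift_perm.
transitivity (\sum_(t : 'S_m.+1 | t (jp hij) == ip hij)
   chi2 (lift_perm i j t) R * \prod_k B k (lift_perm i j t k)).
  rewrite [RHS]big_mkcond; apply eq_bigr => t _.
  rewrite -[X in lift_perm _ _ _ X == _](lift_jp hij) lift_perm_lift.
  by rewrite -[X in _ == X](lift_ip hij) (inj_eq lift_inj).
rewrite sum_lift_perm /d2 mulr_sumr -sumrN; apply eq_bigr => t _.
set s := lift_perm _ _ t; set sg := lift_perm i j s.
have h1 : sg i = j by rewrite lift_perm_id.
have h2 : sg j = i.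
  by rewrite /sg -[X in lift_perm _ _ _ X](lift_jp hij) lift_perm_lift lift_perm_id lift_ip.
have h3 k : sg (lift i (lift (jp hij) k)) = lift i (lift (jp hij) (t k)).
  by rewrite /sg lift_perm_lift lift_perm_lift lift2.
have hji : B j i = B i j.
  by rewrite -[in LHS]hB mxE.
have ij : (j == i) = false by apply/eqP => e; have := hij; rewrite e ltnn.
have hprod : \prod_k B k (sg k) = B i j ^+ 2 * \prod_k del2 B i j k (t k).
  rewrite (bigD1_ord i) // (bigD1_ord (jp hij)) //= lift_jp h1 h2 hji expr2 mulrA.
  congr (_ * _); apply eq_bigr => k _; rewrite h3 mxE !del2_lift //.
have hfix : #|[set x | sg x == x]| = #|[set x | t x == x]|.
  rewrite !cardfix (bigD1_ord i) // (bigD1_ord (jp hij)) //= lift_jp h1 h2 ij eq_sym ij.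
  by rewrite !add0n; apply eq_bigr => k _; rewrite h3 !(inj_eq lift_inj).
have hodd : odd_perm sg = ~~ odd_perm t.
  rewrite /sg /s !odd_lift_perm /=.
  have : odd j = ~~ odd j.-1.
    have := hij; case: (nat_of_ord j) => //.
  move=> ->; by case: (odd i); case: (odd j.-1); case: (odd_perm t).
rewrite /chi2 hprod hfix hodd.
case: (odd_perm t) => /=; rewrite ?expr0 ?expr1; ring.
Qed.

Local Close Scope ring_scope.
Lemma core n (F : 'I_n -> 'I_n -> nat) :
  \sum_(i < n) \sum_(j < n | i <= j) F i j + \sum_(i < n) \sum_(j < n | i <= j) F j i
  = \sum_(i < n) \sum_(j < n) F i j + \sum_(i < n) F i i.
Proof.
have -> : \sum_(i < n) \sum_(j < n | i <= j) F j i = \sum_(i < n) \sum_(j < n | j <= i) F i j.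
  rewrite (exchange_big_dep xpredT) //=.
rewrite -big_split -[in RHS]big_split /=; apply eq_bigr => i _.
rewrite big_mkcond [X in _ + X = _]big_mkcond -big_split /= (bigD1 i) // [in RHS](bigD1 i) //= leqnn.
rewrite (eq_bigr (fun j => F i j)); first lia.
move=> j; case: ltngtP => // h; last by rewrite (val_inj h) eqxx.
  by rewrite addn0.
Qed.

Lemma countS n (s : 'S_n) :
  (2 * \sum_(i < n) \sum_(j < n | i <= j) (~~ ((s i == j) || (s j == i)) : nat) + n
  = n * n + 2 * \sum_(i < n) \sum_(j < n | i < j) ((s i == j) && (s j == i) : nat))%N.
Proof.
have A : (\sum_(i < n) \sum_(j < n | i <= j) (~~ ((s i == j) || (s j == i)) : nat)
   + (\sum_(i < n) \sum_(j < n | i <= j) (s i == j : nat)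
      + \sum_(i < n) \sum_(j < n | i <= j) (s j == i : nat))
   = \sum_(i < n) \sum_(j < n | i <= j) 1
     + \sum_(i < n) \sum_(j < n | i <= j) ((s i == j) && (s j == i) : nat))%N.
  rewrite -!big_split /=; apply eq_bigr => i _; rewrite -!big_split /=.
  apply eq_bigr => j _; by case: (s i == j); case: (s j == i).
have C := @core n (fun i j => (s i == j : nat)).
have D := @core n (fun i j => 1%N).
have E : (\sum_(i < n) \sum_(j < n) (s i == j : nat) = n)%N.
  rewrite -[RHS]card_ord -sum1_card; apply eq_bigr => i _.
  rewrite (bigD1 (s i)) //= eqxx big1 // => j /negbTE; by rewrite eq_sym => ->.
have F : (\sum_(i < n) \sum_(j < n) 1 = n * n)%N.
  by rewrite sum_nat_const card_ord sum_nat_const card_ord muln1.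
have G : (\sum_(i < n) \sum_(j < n | i <= j) ((s i == j) && (s j == i) : nat)
   = \sum_(i < n) (s i == i : nat) + \sum_(i < n) \sum_(j < n | i < j) ((s i == j) && (s j == i) : nat))%N.
  rewrite -big_split; apply eq_bigr => i _ /=; rewrite (bigD1 i) //= andbb.
  congr (_ + _)%N; apply eq_bigl => j; rewrite ltn_neqAle andbC eq_sym //.
have H : (\sum_(i < n) 1 = n)%N by rewrite sum_nat_const card_ord muln1.
rewrite /= in C D; rewrite C E G in A; rewrite F H in D.
move: A D; set X1 := \sum_(i < n) \sum_(j < n | i <= j) _; set X2 := \sum_(i < n) \sum_(j < n | i < j) _; set X3 := \sum_(i < n) (s i == i : nat); set X4 := \sum_(i < n) \sum_(j < n | i <= j) 1. lia.
Qed.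

Local Open Scope ring_scope.

Lemma sumB' (R : comNzRingType) n (B : 'M[R]_n) (i j : 'I_n) (hij : (i < j)%N)
  (hB : B^T = B) :
  B i j ^+ 2 * d2 (del2 B i j) =
  - \sum_(s : 'S_n | (s i == j) && (s j == i)) chi2 s R * \prod_k B k (s k).
Proof.
move: B i j hij hB; case: n => [|[|m]] B i j hij hB.
- by move: hij; case: i.
- by have := ltn_ord j; lia.
- by rewrite sumB // opprK.
Qed.

Theorem lemma2p3 (C : numClosedFieldType) (n : nat) (B : 'M[C]_n) :
  (1 <= n)%N -> B^T = B ->
  2^-1 * ((n ^ 2)%:R - n%:R) * d2 B =
    \sum_(i < n) \sum_(j < n | (i <= j)%N) d2 (zero_pair B i j)
  + \sum_(i < n) \sum_(j < n | (i < j)%N) B i j ^+ 2 * d2 (del2 B i j).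
Proof.
move=> hn hB.
set G := fun s : 'S_n => chi2 s C * \prod_k B k (s k).
have E1 : \sum_(i < n) \sum_(j < n | (i <= j)%N) d2 (zero_pair B i j) =
   \sum_(s : 'S_n) G s * (\sum_(i < n) \sum_(j < n | (i <= j)%N)
         (~~ ((s i == j) || (s j == i)) : nat))%:R.
  transitivity (\sum_(i < n) \sum_(j < n | (i <= j)%N) \sum_(s : 'S_n)
       G s * (~~ ((s i == j) || (s j == i)))%:R).
    by apply eq_bigr => i _; apply eq_bigr => j _; rewrite zp_d2.
  under eq_bigr do rewrite exchange_big.
  rewrite exchange_big; apply eq_bigr => s _.
  rewrite natr_sum mulr_sumr; apply eq_bigr => i _.
  by rewrite natr_sum mulr_sumr.
have E2 : \sum_(i < n) \sum_(j < n | (i < j)%N) B i j ^+ 2 * d2 (del2 B i j) =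
   - \sum_(s : 'S_n) G s * (\sum_(i < n) \sum_(j < n | (i < j)%N)
         ((s i == j) && (s j == i)) : nat)%:R.
  transitivity (- \sum_(i < n) \sum_(j < n | (i < j)%N) \sum_(s : 'S_n)
       G s * ((s i == j) && (s j == i))%:R).
    rewrite -sumrN; apply eq_bigr => i _; rewrite -sumrN; apply eq_bigr => j hij.
    rewrite sumB' //; congr (- _); rewrite big_mkcond; apply eq_bigr => s _.
    by case: ifP => _; rewrite ?mulr1 ?mulr0.
  congr (- _).
  under eq_bigr do rewrite exchange_big.
  rewrite exchange_big; apply eq_bigr => s _.
  rewrite natr_sum mulr_sumr; apply eq_bigr => i _.
  by rewrite natr_sum mulr_sumr.
rewrite E1 E2 /d2 mulr_sumr -sumrN -big_split; apply eq_bigr => s _ /=.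
have h := congr1 (fun x : nat => x%:R : C) (@countS n s).
move: h; rewrite /= !natrD !natrM.
set S1 := (\sum_(i < n) \sum_(j < n | (i <= j)%N) _)%:R.
set S2 := (\sum_(i < n) \sum_(j < n | (i < j)%N) _)%:R.
move=> h.
have sq : (n ^ 2)%:R = n%:R * n%:R :> C by rewrite -natrM mulnn.
have key : (n ^ 2)%:R - n%:R = 2%:R * (S1 - S2) :> C.
  rewrite sq; transitivity ((n%:R * n%:R + (S2 + (S2 + 0))) - n%:R - (S2 + (S2 + 0)) :> C).
    ring.
  rewrite -h; ring.
have key2 : 2^-1 * ((n ^ 2)%:R - n%:R) = S1 - S2 :> C.
  by rewrite key mulKf ?pnatr_eq0.
transitivity ((S1 - S2) * G s); first by congr (_ * _); rewrite -sq.
ring.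
Qed.
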